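(* The Lie algebra of the Lie group $(\delta+\mathbb{K}^m\langle\langle X\rangle\rangle,\circ,\delta)$ (Fréchet topology) is the space $\mathbb{K}^m\langle\langle X\rangle\rangle$ with Lie bracket $$[c,d]=c\lhd d-d\lhd c.$$
   Context: $\mathbb{K}\in\{\mathbb{R},\mathbb{C}\}$. $X=\{x_0,x_1,\ldots,x_m\}$ is a finite alphabet, $X^\ast$ its words (including $\emptyset$). $\mathbb{K}^m\langle\langle X\rangle\rangle$ is the space of maps $X^\ast\to\mathbb{K}^m$ with the Fréchet (product) topology; $d[i]$ denotes the $i$-th component series of $d$. $\delta$ is a formal symbol and $\delta+\mathbb{K}^m\langle\langle X\rangle\rangle=\{\delta+c\}$ is an affine space modelled on $\mathbb{K}^m\langle\langle X\rangle\rangle$. The shuffle product $\sqcup\!\sqcup$ is determined on words by $(x_i\eta)\sqcup\!\sqcup(x_j\xi)=x_i(\eta\sqcup\!\sqcup(x_j\xi))+x_j((x_i\eta)\sqcup\!\sqcup\xi)$, $\eta\sqcup\!\sqcup\emptyset=\emptyset\sqcup\!\sqcup\eta=\eta$. Mixed composition: with $d[0]:=0$, $\phi_d(\emptyset)=\mathrm{id}$, $\phi_d(x_i\eta)=\phi_d(x_i)\circ\phi_d(\eta)$, $\phi_d(x_i)(e)=x_ie+x_0(d[i]\sqcup\!\sqcup e)$, $c\,\tilde\circ\,d_\delta=\sum_\eta(c,\eta)\phi_d(\eta)(1\cdot\emptyset)$; group product $(\delta+c)\circ(\delta+d)=\delta+d+c\,\tilde\circ\,d_\delta$, identity $\delta$;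 this is an analytic Lie group. Pre-Lie product: $c\lhd d=\sum_{\eta}(c,\eta)\,\eta\lhd d$, where $\emptyset\lhd d=0$, $(x_0\eta)\lhd d=x_0(\eta\lhd d)$, and $(x_j\eta)\lhd d=x_j(\eta\lhd d)+x_0(\eta\sqcup\!\sqcup d[j])$ for $j=1,\ldots,m$ (products of elements of $\mathbb{K}^m$ taken componentwise). The Lie algebra is $T_\delta$ of the group with bracket obtained by evaluating at $\delta$ the bracket of left-invariant vector fields. *)

(* Defs.v *)
From HB Require Import structures.
From mathcomp Require Import all_boot all_order all_algebra.
From mathcomp Require Import all_classical all_reals topology normedtype.
Set Implicit Arguments. Unset Strict Implicit. Unset Printing Implicit Defensive.
Import Order.TTheory GRing.Theory Num.Theory.
Import numFieldNormedType.Exports.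
Local Open Scope ring_scope.
Local Open Scope classical_set_scope.

Section Series.
Variables (K : numFieldType) (m : nat).

(* Alphabet X = {x_0,...,x_m} is 'I_m.+1; x_0 = ord0, x_j = lift ord0 (j-1). *)
Definition word := seq 'I_m.+1.
Definition sser := word -> K.
(* K^m<<X>> : component series indexed by 'I_m (component i is d[i+1]). *)
Definition ser := word -> 'I_m -> K.

Definition x0 : 'I_m.+1 := ord0.

Definition sadd (a b : ser) : ser := fun w i => a w i + b w i.
Definition ssub (a b : ser) : ser := fun w i => a w i - b w i.
Definition sscale (t : K) (a : ser) : ser := fun w i => t * a w i.
Definition szero : ser := fun _ _ => 0.
Definition ssadd (a b : sser) : sser := fun w => a w + b w.

Definition sumwords (n : nat) (F : word -> K) : K :=
  \sum_(k < n.+1) \sum_(u : k.-tuple 'I_m.+1) F (val u).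

(* shuffle of words, as a list with multiplicities *)
Fixpoint shw (u : word) : word -> seq word :=
  match u with
  | [::] => fun v => [:: v]
  | a :: u' =>
      fix shv (v : word) : seq word :=
        match v with
        | [::] => [:: u]
        | b :: v' => map (cons a) (shw u' v) ++ map (cons b) (shv v')
        end
  end.

Definition shuffle (a b : sser) : sser := fun w =>
  \sum_(k < (size w).+1) \sum_(u : k.-tuple 'I_m.+1)
     \sum_(v : (size w - k).-tuple 'I_m.+1)
        a (val u) * b (val v) * (count_mem w (shw (val u) (val v)))%:R.

Definition wser (u : word) : sser := fun w => (w == u)%:R.
Definition sone : sser := wser [::].

Definition pre (a : 'I_m.+1) (e : sser) : sser := fun w =>
  if w is b :: w' then (if b == a then e w' else 0) else 0.

(* d[a] for a letter a, with d[0] := 0 *)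
Definition dcomp (d : ser) (a : 'I_m.+1) : sser := fun w =>
  match unlift ord0 a with Some i => d w i | None => 0 end.

Definition phi_letter (d : ser) (a : 'I_m.+1) (e : sser) : sser :=
  ssadd (pre a e) (pre x0 (shuffle (dcomp d a) e)).

Definition phi (d : ser) (eta : word) (e : sser) : sser :=
  foldr (phi_letter d) e eta.

(* mixed composition c ~o d_delta = sum_eta (c,eta) phi_d(eta)(1.empty);
   only words eta with |eta| <= |w| contribute to the coefficient of w. *)
Definition mixcomp (c d : ser) : ser := fun w i =>
  sumwords (size w) (fun eta => c eta i * phi d eta sone w).

(* group product in the affine chart: (delta + c) o (delta + d) = delta + mul c d *)
Definition gmul (c d : ser) : ser := sadd d (mixcomp c d).

Fixpoint wprelie (d : ser) (eta : word) : sser :=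
  match eta with
  | [::] => fun _ => 0
  | a :: eta' =>
      ssadd (pre a (wprelie d eta')) (pre x0 (shuffle (wser eta') (dcomp d a)))
  end.

(* c <| d = sum_eta (c,eta) (eta <| d); only |eta| <= |w| contribute *)
Definition prelie (c d : ser) : ser := fun w i =>
  sumwords (size w) (fun eta => c eta i * wprelie d eta w).

(* Directional derivative of F : K^m<<X>> -> K^m<<X>> at x in direction v,
   for the Frechet (product) topology, i.e. coefficientwise convergence. *)
Definition dirderiv (F : ser -> ser) (x v l : ser) : Prop :=
  forall w i,
    (fun t : K => (F (sadd x (sscale t v)) w i - F x w i) / t) @ 0^' --> l w i.

(* X is the left-invariant vector field with value v at delta, in the chart
   g = delta + c :  X(c) = T_delta(lambda_{delta+c}) v. *)
Definition left_inv_field (v : ser) (X : ser -> ser) : Prop :=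
  forall c, dirderiv (gmul c) szero v (X c).

(* l is the bracket [X_c, X_d] of the left-invariant vector fields evaluated at
   delta, with [X,Y](p) = dY(p)(X(p)) - dX(p)(Y(p)). *)
Definition lie_bracket_at_delta (c d l : ser) : Prop :=
  exists Xc Xd, left_inv_field c Xc /\ left_inv_field d Xd /\
  exists a b, dirderiv Xd szero (Xc szero) a /\
              dirderiv Xc szero (Xd szero) b /\ l = ssub a b.

End Series.

(* Main.v *)
Require Import Defs.
From HB Require Import structures.
From mathcomp Require Import all_boot all_order all_algebra.
From mathcomp Require Import all_classical all_reals topology normedtype.
From mathcomp Require Import ring.
Set Implicit Arguments. Unset Strict Implicit. Unset Printing Implicit Defensive.
Import Order.TTheory GRing.Theory Num.Theory.
Import numFieldNormedType.Exports.
Local Open Scope ring_scope.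
Local Open Scope classical_set_scope.

Section HDsec.
Variable K : numFieldType.

Lemma cvg_fe (f g : K -> K) (F : set_system K) (l : K) :
  f =1 g -> g @ F --> l -> f @ F --> l.
Proof. by move=> /funext ->. Qed.

Lemma cvg_nz_fe (f g : K -> K) (l : K) :
  (forall t, t != 0 -> f t = g t) -> g @ 0^' --> l -> f @ 0^' --> l.
Proof.
move=> fg gl; apply: cvg_trans gl; apply: near_eq_cvg.
near=> t; apply/esym/fg; near: t; exact: nbhs_dnbhs_neq.
Unshelve. all: by end_near.
Qed.

Definition HD (f : K -> K) (l : K) : Prop :=
  (fun t : K => (f t - f 0) / t) @ 0^' --> l.

Lemma HD_ext f g l : (forall t, f t = g t) -> HD f l -> HD g l.
Proof. by move=> /funext ->. Qed.

Lemma HD_eq f l l' : l = l' -> HD f l -> HD f l'.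
Proof. by move=> ->. Qed.

Lemma HD_const (c : K) : HD (fun _ => c) 0.
Proof.
rewrite /HD; apply: (cvg_fe (g:=(fun=> 0))); last exact: cvg_cst.
by move=> t; rewrite subrr mul0r.
Qed.

Lemma HD_lin (a x : K) : HD (fun t => a + t * x) x.
Proof.
rewrite /HD; apply: (cvg_nz_fe (g:=(fun=> x))); last exact: cvg_cst.
by move=> t tn0; rewrite mul0r addr0 addrC addKr mulrC mulKf.
Qed.

Lemma HD_add f g lf lg : HD f lf -> HD g lg -> HD (fun t => f t + g t) (lf + lg).
Proof.
move=> Hf Hg; rewrite /HD.
apply: (cvg_fe (g:=((fun t => (f t - f 0) / t) + (fun t => (g t - g 0) / t)))).
  by move=> t /=; rewrite -mulrDl opprD addrACA.
exact: cvgD.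
Qed.

Lemma HD_mulr f lf (c : K) : HD f lf -> HD (fun t => f t * c) (lf * c).
Proof.
move=> Hf; rewrite /HD.
apply: (cvg_fe (g:=(fun t => (f t - f 0) / t * c))).
  by move=> t /=; ring.
exact: cvgMr_tmp.
Qed.

Lemma HD_cont g lg : HD g lg -> g @ 0^' --> g 0.
Proof.
move=> Hg.
have H1 : (fun t : K => g 0 + t * ((g t - g 0) / t)) @ 0^' --> g 0 + 0 * lg.
  apply: cvgD; first exact: cvg_cst.
  apply: cvgM => //. exact: cvg_within.
rewrite mul0r addr0 in H1.
apply: (cvg_nz_fe _ H1) => t tn0.
by rewrite mulrC mulfVK // addrC subrK.
Qed.

Lemma HD_mul f g lf lg : HD f lf -> HD g lg ->
  HD (fun t => f t * g t) (lf * g 0 + f 0 * lg).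
Proof.
move=> Hf Hg; rewrite /HD.
apply: (cvg_fe (g:=((fun t => (f t - f 0) / t) \* g + (fun t => f 0 * ((g t - g 0) / t))))).
  move=> t; transitivity ((f t - f 0) / t * g t + f 0 * ((g t - g 0) / t)); [ring | by []].
apply: cvgD; first exact: cvgM (HD_cont Hg).
exact: cvgMl_tmp.
Qed.

Lemma HD_sum (I : Type) (r : seq I) (P : pred I) (F : I -> K -> K) (L : I -> K) :
  (forall i, P i -> HD (F i) (L i)) ->
  HD (fun t => \sum_(i <- r | P i) F i t) (\sum_(i <- r | P i) L i).
Proof.
move=> HF; elim: r => [|x r IH].
  rewrite big_nil; apply: HD_ext (HD_const 0) => t; by rewrite big_nil.
rewrite big_cons; case Px: (P x).
  apply: HD_ext (HD_add (HF x Px) IH) => t; by rewrite big_cons Px.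
apply: HD_ext IH => t; by rewrite big_cons Px.
Qed.

End HDsec.
Section Comb.
Variables (K : numFieldType) (m : nat).
Local Notation T := 'I_m.+1.
Local Notation word := (word m).

Lemma shw_nil_r (u : word) : shw u [::] = [:: u].
Proof. by case: u. Qed.

Lemma shw_cons (a b : T) (u v : word) : shw (a :: u) (b :: v) =
  map (cons a) (shw u (b :: v)) ++ map (cons b) (shw (a :: u) v).
Proof. by []. Qed.

Lemma perm_shw (u v : word) : perm_eq (shw u v) (shw v u).
Proof.
move: {2}(size u + size v)%N (leqnn (size u + size v)%N) => n.
elim: n u v => [|n IH] [|a u] [|b v] //=; rewrite ?shw_nil_r // => H.
rewrite -/(shw (a :: u) v) -/(shw (b :: v) u).
rewrite perm_catC; apply: perm_cat; apply: perm_map; apply: IH => /=;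
  by move: H; rewrite /= addSn addnS !ltnS // => /ltnW.
Qed.

Lemma pick_tuple j (e : word) (G : word -> K) :
  \sum_(v : j.-tuple T) (val v == e)%:R * G (val v) = if size e == j then G e else 0.
Proof.
case: eqP => [<-|ne].
  rewrite (bigD1 (in_tuple e)) //= eqxx mul1r big1 ?addr0 // => v vne.
  case: eqP => [ve|]; last by rewrite mul0r.
  move: vne; have -> : v = in_tuple e by exact: val_inj.
  by rewrite eqxx.
apply: big1 => v _; case: eqP => [ve|]; last by rewrite mul0r.
by move: ne; rewrite -ve size_tuple.
Qed.

Lemma S1 (F : word -> K) (C : word -> word -> K) (e : word) n :
  \sum_(k < n.+1) \sum_(u : k.-tuple T) \sum_(v : (n - k).-tuple T)
     F u * (val v == e)%:R * C u v
  = if (size e <= n)%N then \sum_(x : (n - size e).-tuple T) F x * C x e else 0.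
Proof.
transitivity (\sum_(k < n.+1) (if ((k == n - size e :> nat) && (size e <= n))%N
     then \sum_(u : k.-tuple T) F u * C u e else 0)).
  apply: eq_bigr => k _.
  under eq_bigr => u _.
    under eq_bigr => v _ do rewrite (mulrC (F u)) -mulrA.
    rewrite (pick_tuple _ _ (fun v => F u * C u v)). over.
  have -> : (size e == n - k)%N = ((k == n - size e :> nat) && (size e <= n))%N.
    have := ltn_ord k; rewrite ltnS => kn.
    apply/eqP/andP => [->|[/eqP -> se]]; first by rewrite subKn // leq_subr.
    by rewrite subKn.
  by case: ifP => _ //; rewrite big1.
case: ifP => se; last by rewrite big1 // => k _; rewrite andbF.
under eq_bigr => k _ do rewrite andbT.
by rewrite -big_mkcond (big_ord1_eq _ (fun k : nat => \sum_(u : k.-tuple T) F u * C u e)) ltnS leq_subr.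
Qed.

Lemma S2 (F : word -> K) (C : word -> word -> K) (e : word) n :
  \sum_(k < n.+1) \sum_(u : k.-tuple T) \sum_(v : (n - k).-tuple T)
     (val u == e)%:R * F v * C u v
  = if (size e <= n)%N then \sum_(x : (n - size e).-tuple T) F x * C e x else 0.
Proof.
transitivity (\sum_(k < n.+1) (if (k == size e :> nat)
     then \sum_(v : (n - k).-tuple T) F v * C e v else 0)).
  apply: eq_bigr => k _.
  under eq_bigr => u _.
    under eq_bigr => v _ do rewrite -mulrA.
    rewrite -mulr_sumr. over.
  by rewrite (pick_tuple _ _ (fun u => \sum_(v : (n - k).-tuple T) F v * C u v)) eq_sym.
by rewrite -big_mkcond (big_ord1_eq _ (fun k : nat => \sum_(v : (n - k).-tuple T) F v * C e v)) ltnS.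
Qed.

End Comb.

Section Main.
Variables (K : numFieldType) (m : nat).
Local Notation T := 'I_m.+1.
Local Notation word := (word m).
Local Notation ser := (ser K m).
Local Notation td d t := (sadd (@szero K m) (sscale t d)).

Lemma HD_mull (f : K -> K) lf (c : K) : HD f lf -> HD (fun t => c * f t) (c * lf).
Proof.
move=> H; rewrite mulrC; apply: (HD_ext _ (HD_mulr (c:=c) H)) => t; exact: mulrC.
Qed.

Lemma td0 (d : ser) : td d 0 = @szero K m.
Proof. by apply/funext => w; apply/funext => i; rewrite /sadd /sscale /szero mul0r addr0. Qed.

Lemma shuffle0l (a b : sser K m) w : (forall u, a u = 0) -> shuffle a b w = 0.
Proof.
move=> a0; rewrite /shuffle; apply: big1 => k _; apply: big1 => u _; apply: big1 => v _.
by rewrite a0 !mul0r.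
Qed.

Lemma dcomp0 (a : T) u : dcomp (@szero K m) a u = 0.
Proof. by rewrite /dcomp; case: unlift. Qed.

Lemma phi0 (eta : word) w : phi (@szero K m) eta (@sone K m) w = (w == eta)%:R.
Proof.
elim: eta w => [|a eta IH] w //=.
rewrite /phi_letter /ssadd /pre; case: w => [|b w] //=; first by rewrite addr0.
rewrite IH shuffle0l; last exact: dcomp0.
by rewrite if_same addr0 eqseq_cons; case: (b == a).
Qed.


Lemma HDdcomp (d : ser) (a : T) u :
  HD (fun t => dcomp (td d t) a u) (dcomp d a u).
Proof.
rewrite /dcomp; case: (unlift ord0 a) => [i|]; last exact: HD_const.
exact: HD_lin.
Qed.

Lemma Lphi (d : ser) (eta : word) w :
  HD (fun t => phi (td d t) eta (@sone K m) w) (wprelie d eta w).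
Proof.
elim: eta w => [|a eta IH] w /=; first exact: HD_const.
rewrite /phi_letter /ssadd /pre; case: w => [|b w] /=.
  by apply: (HD_eq _ (HD_const _)); rewrite addr0.
apply: HD_add.
  by case: (b == a); [exact: IH | exact: HD_const].
case: (b == x0 m); last exact: HD_const.
have H : HD (fun t => shuffle (dcomp (td d t) a) (phi (td d t) eta (@sone K m)) w)
  (\sum_(k < (size w).+1) \sum_(u : k.-tuple T) \sum_(v : (size w - k).-tuple T)
     dcomp d a u * (val v == eta)%:R * (count_mem w (shw (val u) (val v)))%:R).
  rewrite /shuffle; apply: HD_sum => k _; apply: HD_sum => u _; apply: HD_sum => v _.
  apply: HD_mulr.
  apply: (HD_eq _ (HD_mul (@HDdcomp d a (val u)) (IH (val v)))).
  by rewrite td0 phi0 dcomp0 mul0r addr0.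
apply: (HD_eq _ H).
rewrite /shuffle.
rewrite (S1 (dcomp d a) (fun u v => (count_mem w (shw u v))%:R)).
rewrite /wser /=.
rewrite (S2 (dcomp d a) (fun u v => (count_mem w (shw u v))%:R)).
case: ifP => // _; apply: eq_bigr => x _.
by rewrite (permP (perm_shw _ _)).
Qed.


Lemma dirderiv_HD (F : ser -> ser) (v l : ser) :
  (forall w i, HD (fun t => F (td v t) w i) (l w i)) -> dirderiv F (@szero K m) v l.
Proof. by move=> H w i; have := H w i; rewrite /HD td0. Qed.

Lemma dd_unique (F : ser -> ser) (x v l1 l2 : ser) :
  dirderiv F x v l1 -> dirderiv F x v l2 -> l1 = l2.
Proof.
move=> H1 H2; apply/funext => w; apply/funext => i.
exact: (cvg_unique _ (H1 w i) (H2 w i)).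
Qed.

Definition myX (v : ser) : ser -> ser := fun p => sadd v (prelie p v).

Lemma LI (v : ser) : left_inv_field v (myX v).
Proof.
move=> p; apply: dirderiv_HD => w i.
rewrite /gmul /myX /sadd /mixcomp /sumwords /prelie /sumwords.
apply: HD_add; first exact: HD_lin.
apply: HD_sum => k _; apply: HD_sum => u _.
apply: HD_mull; exact: Lphi.
Qed.

Lemma LI_unique (v : ser) X : left_inv_field v X -> X = myX v.
Proof. by move=> H; apply/funext => p; exact: (dd_unique (H p) (@LI v p)). Qed.

Lemma myX0 (v : ser) : myX v (@szero K m) = v.
Proof.
apply/funext => w; apply/funext => i.
rewrite /myX /sadd /prelie /sumwords big1 ?addr0 // => k _.
by apply: big1 => u _; rewrite /szero mul0r.
Qed.

Lemma bracket (c d : ser) : dirderiv (myX d) (@szero K m) c (prelie c d).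
Proof.
apply: dirderiv_HD => w i.
rewrite /myX /sadd /prelie /sumwords.
rewrite -[X in HD _ X]add0r; apply: HD_add; first exact: HD_const.
apply: HD_sum => k _; apply: HD_sum => u _.
apply: HD_mulr; exact: HD_lin.
Qed.

End Main.

Unset Implicit Arguments.
Local Close Scope classical_set_scope.

Theorem proposition5p5 (K : numFieldType) (m : nat) (c d : ser K m) :
  forall l : ser K m,
    lie_bracket_at_delta c d l <-> l = ssub (prelie c d) (prelie d c).
Proof.
move=> l; split.
  case=> Xc [Xd [HXc [HXd [a [b [Ha [Hb ->]]]]]]].
  move: (LI_unique HXc) (LI_unique HXd) => eXc eXd; subst Xc Xd.
  rewrite !myX0 in Ha Hb.
  by rewrite (dd_unique Ha (@bracket _ _ c d)) (dd_unique Hb (@bracket _ _ d c)).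
move=> ->; exists (myX c), (myX d); split; first exact: LI.
split; first exact: LI.
exists (prelie c d), (prelie d c); rewrite !myX0.
by split; [exact: bracket | split; [exact: bracket | done]].
Qed.
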